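(* Let $\beta,\gamma\ge0$ with $\beta+\gamma>0$. Let $\mu_{\beta,\gamma}$ be the unique strictly increasing continuous function on $[0,T]$, continuously differentiable on $(0,T]$, with $\mu_{\beta,\gamma}(0)=0$ and $\mu'_{\beta,\gamma}(s)=\frac{\gamma^2}{2\mu_{\beta,\gamma}(s)}+\frac{\sqrt2}{2}\beta$ for $s\in(0,T]$; let $\nu_{\beta,\gamma}(s):=\int_0^s\big[\frac{\sqrt2}{2}\beta\mu_{\beta,\gamma}(r)+\frac{\gamma^2}{2}\big(1+\frac{\sqrt2}{\mu_{\beta,\gamma}(r)}\big)\big]dr$; let $\varphi(s,x):=(x+e)\exp\big(\mu_{\beta,\gamma}(s)\sqrt{2\ln(x+e)}+\nu_{\beta,\gamma}(s)\big)$ and $\psi(x,\mu):=x\exp(\mu\sqrt{2\ln(1+x)})$. Then there exists a constant $K>0$ depending only on $(\beta,\gamma,T)$ such that for all $(s,x)\in[0,T]\times\mathbb R_+$, $$\psi(x,\mu_{\beta,\gamma}(s))\le\varphi(s,x)\le K\psi(x,\mu_{\beta,\gamma}(s))+K.$$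
   Context: $T>0$ is fixed. *)

(* Defs.v *)
From HB Require Import structures.
From mathcomp Require Import all_boot all_order all_algebra.
From mathcomp Require Import all_classical all_reals all_analysis.
Set Implicit Arguments. Unset Strict Implicit. Unset Printing Implicit Defensive.
Import Order.TTheory GRing.Theory Num.Theory.
Import numFieldNormedType.Exports.
Local Open Scope classical_set_scope.
Local Open Scope ring_scope.

(* Hypotheses characterizing mu_{beta,gamma} on [0,T]:
   strictly increasing and continuous on [0,T], mu(0)=0,
   mu'(s) = gamma^2/(2 mu(s)) + (sqrt 2/2) beta for s in (0,T)
   (two-sided derivative), and the same value as left derivative at s = T. *)
Definition is_mu (R : realType) (T beta gamma : R) (mu : R -> R) : Prop :=
  [/\ (forall x y, 0 <= x -> x < y -> y <= T -> mu x < mu y),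
      {within `[0, T], continuous mu},
      mu 0 = 0,
      (forall s, 0 < s -> s < T ->
          is_derive s 1 mu (gamma ^+ 2 / (2 * mu s) + Num.sqrt 2 / 2 * beta)) &
      (fun h => h^-1 * (mu (T + h) - mu T)) @ 0^'- -->
          (gamma ^+ 2 / (2 * mu T) + Num.sqrt 2 / 2 * beta)].

Definition nu_fun (R : realType) (beta gamma : R) (mu : R -> R) (s : R) : R :=
  Rintegral (@lebesgue_measure R) `[0, s]
    (fun r => Num.sqrt 2 / 2 * beta * mu r
              + gamma ^+ 2 / 2 * (1 + Num.sqrt 2 / mu r)).

Definition varphi (R : realType) (beta gamma : R) (mu : R -> R) (s x : R) : R :=
  (x + expR 1) * expR (mu s * Num.sqrt (2 * ln (x + expR 1)) + nu_fun beta gamma mu s).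

Definition psi (R : realType) (x m : R) : R :=
  x * expR (m * Num.sqrt (2 * ln (1 + x))).

(* Main.v *)
Require Import Defs.
From HB Require Import structures.
From mathcomp Require Import all_boot all_order all_algebra.
From mathcomp Require Import all_classical all_reals all_analysis.
From mathcomp Require Import ring lra measurable_realfun.
Import Order.TTheory GRing.Theory Num.Theory.
Import numFieldNormedType.Exports.
Set Implicit Arguments. Unset Strict Implicit.
Local Open Scope classical_set_scope.
Local Open Scope ring_scope.

Lemma sqrtD_le {R : realType} (a b : R) : 0 <= a -> 0 <= b ->
  Num.sqrt (a + b) <= Num.sqrt a + Num.sqrt b.
Proof.
move=> a0 b0.
have sa := sqrtr_ge0 a; have sb := sqrtr_ge0 b.
have ha := sqr_sqrtr a0; have hb := sqr_sqrtr b0.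
rewrite -(ger0_norm (addr_ge0 sa sb)) -sqrtr_sqr.
apply: ler_wsqrtr; nra.
Qed.

Lemma key (R : realType) (M N m n x : R) : 0 <= m -> m <= M -> 0 <= n -> n <= N -> 0 <= x ->
  let E := expR 1 in
  let K := (1 + E) * expR (M * Num.sqrt 2 + N) * expR (M * Num.sqrt 2) in
  x * expR (m * Num.sqrt (2 * ln (1 + x))) <= (x + E) * expR (m * Num.sqrt (2 * ln (x + E)) + n) /\
  (x + E) * expR (m * Num.sqrt (2 * ln (x + E)) + n) <= K * (x * expR (m * Num.sqrt (2 * ln (1 + x)))) + K.
Proof.
move=> m0 mM n0 nN x0 E K.
have E2 : 2 <= E by have := expR_ge1Dx (1 : R); rewrite /E.
have x1 : 0 < 1 + x by lra.
have xE : 0 < x + E by lra.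
set l := ln (1 + x); set L := ln (x + E).
have l0 : 0 <= l by apply: ln_ge0; lra.
have lL : l <= L by rewrite /l /L ler_ln ?posrE //; lra.
have L1 : L <= 1 + l.
  have -> : 1 + l = ln (E * (1 + x)) by rewrite lnM ?posrE // ?expRK //; lra.
  rewrite /L ler_ln ?posrE //; nra.
have sq : Num.sqrt (2 * L) <= Num.sqrt (2 * l) + Num.sqrt 2.
  have h := @sqrtD_le R (2 * l) 2.
  have h' : Num.sqrt (2 * L) <= Num.sqrt (2 * l + 2) by apply: ler_wsqrtr; lra.
  apply: le_trans h' (h _ _); lra.
have s2 := sqrtr_ge0 (2 : R); have s2l := sqrtr_ge0 (2 * l).
set P := expR (m * Num.sqrt (2 * l)).
have P0 : 0 < P by apply: expR_gt0.
have Mge0 : 0 <= M by lra.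
have B1 : 1 <= expR (M * Num.sqrt 2).
  apply: le_trans (expR_ge1Dx _); have : 0 <= M * Num.sqrt 2 by apply: mulr_ge0.
  lra.
have AN : 0 < expR (M * Num.sqrt 2 + N) by apply: expR_gt0.
split.
  apply: ler_pM; [lra|by apply: ltW|lra|].
  rewrite ler_expR; have : m * Num.sqrt (2 * l) <= m * Num.sqrt (2 * L).
    by apply: ler_wpM2l => //; apply: ler_wsqrtr; lra.
  lra.
have up : expR (m * Num.sqrt (2 * L) + n) <= P * expR (M * Num.sqrt 2 + N).
  rewrite /P -expRD ler_expR.
  have : m * Num.sqrt (2 * L) <= m * Num.sqrt (2 * l) + M * Num.sqrt 2.
    apply: le_trans (_ : m * (Num.sqrt (2 * l) + Num.sqrt 2) <= _).
      exact: ler_wpM2l.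
    rewrite mulrDr lerD2l; exact: ler_wpM2r.
  lra.
have K0 : 0 <= K by rewrite /K; apply: mulr_ge0; [apply: mulr_ge0|]; apply/ltW => //; [lra|apply: expR_gt0].
have psi0 : 0 <= x * P by apply: mulr_ge0 => //; apply/ltW.
apply: le_trans (_ : (x + E) * (P * expR (M * Num.sqrt 2 + N)) <= _).
  by apply: ler_wpM2l => //; lra.
have [x1'|x1'] := leP 1 x.
  apply: le_trans (_ : K * (x * P) <= _); last lra.
  rewrite /K.
  have h1 : x + E <= (1 + E) * x by nra.
  have h2 : (x + E) * (P * expR (M * Num.sqrt 2 + N)) <= (1 + E) * x * (P * expR (M * Num.sqrt 2 + N)).
    by apply: ler_wpM2r => //; apply: mulr_ge0; apply/ltW.
  apply: le_trans h2 _.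
  have h3 : 0 <= (1 + E) * x * (P * expR (M * Num.sqrt 2 + N)).
    by apply: mulr_ge0; [nra|apply: mulr_ge0; apply/ltW].
  have -> : (1 + E) * expR (M * Num.sqrt 2 + N) * expR (M * Num.sqrt 2) * (x * P) =
     ((1 + E) * x * (P * expR (M * Num.sqrt 2 + N))) * expR (M * Num.sqrt 2) by ring.
  rewrite ler_peMr //.
apply: le_trans (_ : K <= _); last nra.
have lx : l <= 1 by apply: le_trans (le_ln1Dx _) _; lra.
have PB : P <= expR (M * Num.sqrt 2).
  rewrite /P ler_expR; apply: le_trans (_ : m * Num.sqrt 2 <= _); last exact: ler_wpM2r.
  by apply: ler_wpM2l => //; apply: ler_wsqrtr; lra.
rewrite /K.
have -> : (1 + E) * expR (M * Num.sqrt 2 + N) * expR (M * Num.sqrt 2) =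
   (1 + E) * (expR (M * Num.sqrt 2) * expR (M * Num.sqrt 2 + N)) by ring.
apply: ler_pM; [lra| apply: mulr_ge0; apply/ltW => //| lra|].
apply: ler_wpM2r; [exact/ltW|exact: PB].
Qed.

Section S.
Variables (R : realType) (T beta gamma : R) (mu : R -> R).
Hypothesis hT : 0 < T.
Hypothesis hbeta : 0 <= beta.
Hypothesis hmu : is_mu T beta gamma mu.

Lemma mu_ge0 s : 0 <= s -> s <= T -> 0 <= mu s.
Proof.
case: hmu => inc _ mu0 _ _ s0 sT.
have [->|s0'] := eqVneq s 0; first by rewrite mu0.
by rewrite -mu0; apply/ltW/inc => //; rewrite lt_neqAle eq_sym s0' s0.
Qed.

Lemma mu_gt0 s : 0 < s -> s <= T -> 0 < mu s.
Proof. by case: hmu => inc _ mu0 _ _ s0 sT; rewrite -mu0; apply: inc. Qed.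

Lemma mu_leT s : 0 <= s -> s <= T -> mu s <= mu T.
Proof.
case: hmu => inc _ _ _ _ s0 sT.
have [->|sT'] := eqVneq s T; first by [].
by apply/ltW/inc => //; rewrite lt_neqAle sT' sT.
Qed.

Definition f : R -> R := fun r => Num.sqrt 2 / 2 * beta * mu r
              + gamma ^+ 2 / 2 * (1 + Num.sqrt 2 / mu r).

Lemma f_ge0 r : 0 <= r -> r <= T -> 0 <= f r.
Proof.
move=> r0 rT; have m0 := mu_ge0 r0 rT; rewrite /f.
apply: addr_ge0; first by apply: mulr_ge0 => //; apply: mulr_ge0 => //; apply: divr_ge0 => //.
apply: mulr_ge0; first by apply: divr_ge0 => //; apply: sqr_ge0.
by apply: addr_ge0 => //; apply: divr_ge0.
Qed.

Lemma f_cont x : 0 < x < T -> {for x, continuous f}.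
Proof.
case/andP=> x0 xT.
case: hmu => _ _ _ der _.
have cm : {for x, continuous mu}.
  apply: differentiable_continuous; apply/derivable1_diffP.
  by have [] := der x x0 xT.
have mx0 : mu x != 0 by rewrite gt_eqF // mu_gt0 // ltW.
rewrite /f.
apply: continuousD.
  apply: continuousM => //; exact: cvg_cst.
apply: continuousM; first exact: cvg_cst.
apply: continuousD; first exact: cvg_cst.
apply: continuousM; first exact: cvg_cst.
exact: continuousV.
Qed.

Lemma f_meas : measurable_fun `[0, T] f.
Proof.
apply: (@measurable_fun_itv_cc _ _ _ false true).
apply: open_continuous_measurable_fun; first exact: itv_open.
move=> x; rewrite inE /= in_itv /=; exact: f_cont.
Qed.


Local Notation leb := (@lebesgue_measure R).

Lemma F_meas : measurable_fun `[0, T]%classic (fun x => (f x)%:E).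
Proof. by apply/measurable_EFinP; exact: f_meas. Qed.

Lemma F_ge0 : forall x, `[0, T]%classic x -> (0 <= (f x)%:E)%E.
Proof. by move=> x; rewrite /= in_itv /= => /andP[x0 xT]; rewrite lee_fin f_ge0. Qed.

Lemma Jinf s : 0 < s -> s < T ->
  (\int[leb]_(x in `[0%R, T]%classic) (f x)%:E = +oo)%E ->
  (\int[leb]_(x in `[0%R, s]%classic) (f x)%:E = +oo)%E.
Proof.
move=> s0 sT Iinf.
have ms : mu s > 0 by apply: mu_gt0 => //; apply: ltW.
pose B := Num.sqrt 2 / 2 * beta * mu T + gamma ^+ 2 / 2 * (1 + Num.sqrt 2 / mu s).
have Bnd : forall r, s < r <= T -> f r <= B.
  move=> r /andP[sr rT].
  have r0 : 0 < r by apply: lt_trans sr.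
  have mr : mu s < mu r by case: hmu => inc _ _ _ _; apply: inc => //; apply: ltW.
  rewrite /f /B; apply: lerD.
    apply: ler_wpM2l; last by apply: mu_leT => //; apply: ltW.
    by apply: mulr_ge0 => //; apply: divr_ge0.
  apply: ler_wpM2l; first by apply: divr_ge0 => //; apply: sqr_ge0.
  rewrite lerD2l; apply: ler_wpM2l => //.
  by rewrite lef_pV2 ?posrE //; [apply: ltW | apply: lt_trans mr].
have split : `[0, T]%classic = (`[0, s] `|` `]s, T])%classic :> set R.
  by rewrite -itv_bndbnd_setU // bnd_simp; apply: ltW.
move: Iinf; rewrite split ge0_integral_setU //; last 3 first.
- by rewrite -split; exact: F_meas.
- by rewrite -split; exact: F_ge0.
- apply/disj_setPS => x [] /=; rewrite !in_itv /= => /andP[_ xs] /andP[sx _].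
  by move: (lt_le_trans sx xs); rewrite ltxx.
have K0 : (0 <= \int[leb]_(x in `]s, T]%classic) (f x)%:E)%E.
  apply: integral_ge0 => x; rewrite /= in_itv /= => /andP[sx xT].
  by rewrite lee_fin f_ge0 //; apply/ltW/(lt_trans s0).
have Kfin : (\int[leb]_(x in `]s, T]%classic) (f x)%:E < +oo)%E.
  have Kle : (\int[leb]_(x in `]s, T]%classic) (f x)%:E <= \int[leb]_(x in `]s, T]%classic) (cst B%:E) x)%E.
    apply: ge0_le_integral => //.
    - move=> x; rewrite /= in_itv /= => /andP[sx xT].
      by rewrite lee_fin f_ge0 //; apply/ltW/(lt_trans s0).
    - apply: measurable_funS F_meas => //.
      by move=> x; rewrite /= !in_itv /= => /andP[sx ->]; rewrite andbT; apply/ltW/(lt_trans s0).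
  apply: le_lt_trans Kle _.
  have Em := lebesgue_measure_itv `]s, T]; rewrite /= lte_fin sT in Em.
  have hm : (leb `]s, T] < +oo)%E by rewrite Em ltry.
  have B0 : 0 <= B.
    apply: le_trans (Bnd T _); [apply: f_ge0 => //; exact: ltW | by rewrite sT lexx].
  rewrite integral_cst //; apply: lte_mul_pinfty; [by rewrite lee_fin | by [] | ].
  exact: hm.
move=> H; apply/eqP; rewrite -leye_eq leNgt; apply/negP => Jlt.
have J0 : (0 <= \int[leb]_(x in `[0%R, s]%classic) (f x)%:E)%E.
  apply: integral_ge0 => x; rewrite /= in_itv /= => /andP[x0 xs].
  by rewrite lee_fin f_ge0 //; apply/ltW/(le_lt_trans xs).
have := lte_add_pinfty Jlt Kfin.
by rewrite H ltxx.
Qed.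


Lemma nu_le s : 0 <= s -> s <= T ->
  0 <= nu_fun beta gamma mu s <= fine (\int[leb]_(x in `[0%R, T]%classic) (f x)%:E).
Proof.
move=> s0 sT.
have -> : nu_fun beta gamma mu s = fine (\int[leb]_(x in `[0%R, s]%classic) (f x)%:E) by [].
have J0 : (0 <= \int[leb]_(x in `[0%R, s]%classic) (f x)%:E)%E.
  apply: integral_ge0 => x; rewrite /= in_itv /= => /andP[x0 xs].
  by rewrite lee_fin f_ge0 //; apply: le_trans sT.
have JI : (\int[leb]_(x in `[0%R, s]%classic) (f x)%:E <= \int[leb]_(x in `[0%R, T]%classic) (f x)%:E)%E.
  apply: ge0_subset_integral => //; [exact: F_meas | exact: F_ge0 |].
  by move=> x; rewrite /= !in_itv /= => /andP[-> xs]; apply: le_trans sT.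
rewrite fine_ge0 //=.
have [Ilt|Ige] := ltP (\int[leb]_(x in `[0%R, T]%classic) (f x)%:E)%E +oo%E.
  apply: fine_le.
  - by rewrite ge0_fin_numE // (le_lt_trans JI Ilt).
  - by rewrite ge0_fin_numE // (le_trans J0 JI).
  - exact: JI.
have Ieq : (\int[leb]_(x in `[0%R, T]%classic) (f x)%:E = +oo)%E by apply/eqP; rewrite -leye_eq.
rewrite Ieq /=.
have [s00|s00] := eqVneq s 0.
  by rewrite s00 set_itv1 integral_set1.
have s0' : 0 < s by rewrite lt_neqAle eq_sym s00 s0.
have [sTe|sTe] := eqVneq s T; first by rewrite sTe Ieq.
have sT' : s < T by rewrite lt_neqAle sTe sT.
by rewrite Jinf.
Qed.

End S.

Theorem proposition3p4 (R : realType) (T beta gamma : R) (hT : 0 < T)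
  (hbeta : 0 <= beta) (hgamma : 0 <= gamma) (hbg : 0 < beta + gamma)
  (mu : R -> R) (hmu : is_mu T beta gamma mu) :
  exists K : R, 0 < K /\
    forall s x : R, 0 <= s -> s <= T -> 0 <= x ->
      psi x (mu s) <= varphi beta gamma mu s x /\
      varphi beta gamma mu s x <= K * psi x (mu s) + K.
Proof.
set N := fine (\int[@lebesgue_measure R]_(x in `[0%R, T]%classic) (f beta gamma mu x)%:E).
set M := mu T.
exists ((1 + expR 1) * expR (M * Num.sqrt 2 + N) * expR (M * Num.sqrt 2)); split.
  apply: mulr_gt0; [apply: mulr_gt0|]; last exact: expR_gt0; last exact: expR_gt0.
  by apply: addr_gt0 => //; apply: expR_gt0.
move=> s x s0 sT x0.
have m0 := mu_ge0 hmu s0 sT.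
have mM := mu_leT hmu s0 sT.
have /andP[n0 nN] := nu_le hT hbeta hmu s0 sT.
exact: (key m0 mM n0 nN x0).
Qed.
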